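(* Let $X \in \Lambda^2_{14} = \mathfrak{g}_2$ with $\operatorname{rank} X \leq 4$. Then $\ker X$ contains an associative $3$-plane.
   Context: Equip $\mathbb{R}^7$ with its standard inner product and basis. Let $\varphi = e_{123} - e_{167} - e_{527} - e_{563} - e_{415} - e_{426} - e_{437}$ ($e_{ijk} = e_i\wedge e_j \wedge e_k$) and define the cross product by $\langle u\times v, w\rangle = \varphi(u,v,w)$. A skew bilinear form $X$ is identified with the skew-adjoint operator $X$ given by $X(u,v) = \langle X(u),v\rangle$ (rank and kernel refer to this operator). $\Lambda^2_{14} = \mathfrak{g}_2$ is the set of skew bilinear forms $X$ with $X(v\times w) = X(v)\times w + v \times X(w)$ for all $v,w$. A $3$-dimensional subspace is associative if it is closed under $\times$. *)

(* Defs.v *)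
(* R^7 is modelled by row vectors 'rV[R]_7 over a realType R,
   standard basis e_1..e_7 = delta rows at ordinals 0..6. *)
From HB Require Import structures.
From mathcomp Require Import all_boot all_order all_algebra.
From mathcomp Require Import reals.
Set Implicit Arguments. Unset Strict Implicit. Unset Printing Implicit Defensive.
Import Order.TTheory GRing.Theory Num.Theory.
Local Open Scope ring_scope.

Section G2.
Variable R : realType.
Notation vec := 'rV[R]_7.

(* index with 1-based numbering as in the paper *)
Definition ix (i : nat) : 'I_7 := inord i.-1.

Definition dotv (u v : vec) : R := \sum_(k < 7) u 0 k * v 0 k.

(* e_{ijk} = e_i /\ e_j /\ e_k evaluated on (u,v,w): the 3x3 determinant *)
Definition e3 (i j k : nat) (u v w : vec) : R :=
  \det (\matrix_(a < 3, b < 3)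
          (nth u [:: u; v; w] a) 0 (ix (nth i [:: i; j; k] b))).

Definition phi (u v w : vec) : R :=
  e3 1 2 3 u v w - e3 1 6 7 u v w - e3 5 2 7 u v w - e3 5 6 3 u v w
  - e3 4 1 5 u v w - e3 4 2 6 u v w - e3 4 3 7 u v w.

(* cross product: <u x v, w> = phi(u,v,w); its k-th coordinate is phi(u,v,e_k) *)
Definition cross (u v : vec) : vec := \row_(k < 7) phi u v (delta_mx 0 k).

(* the skew-adjoint operator X acting on the vector u (X u, as a row vector) *)
Definition op (X : 'M[R]_7) (u : vec) : vec := u *m X^T.

(* skew bilinear forms, identified with skew-adjoint matrices *)
Definition skew (X : 'M[R]_7) : Prop := X^T = - X.

Definition in_g2 (X : 'M[R]_7) : Prop :=
  skew X /\
  forall v w : vec, op X (cross v w) = cross (op X v) w + cross v (op X w).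

Definition associative_plane (U : 'M[R]_(3, 7)) : Prop :=
  \rank U = 3%N /\
  forall u v : vec, (u <= U)%MS -> (v <= U)%MS -> (cross u v <= U)%MS.

End G2.

(* Main.v *)
Require Import Defs.
From HB Require Import structures.
From mathcomp Require Import all_boot all_order all_algebra.
From mathcomp Require Import reals.
From mathcomp Require Import ring zify.
Import Order.TTheory GRing.Theory Num.Theory.
Local Open Scope ring_scope.


Lemma det3f (R : comNzRingType) (f : nat -> nat -> R) :
  \det (\matrix_(i < 3, j < 3) f i j) =
  f 0 0 * (f 1 1 * f 2 2 - f 1 2 * f 2 1)
- f 0 1 * (f 1 0 * f 2 2 - f 1 2 * f 2 0)
+ f 0 2 * (f 1 0 * f 2 1 - f 1 1 * f 2 0).
Proof.
rewrite (expand_det_row _ 0) !big_ord_recl big_ord0 /cofactor.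
rewrite !(expand_det_row _ 0) !big_ord_recl !big_ord0 /cofactor !det_mx11 !mxE /bump /=.
rewrite /bump /= ?addn0 ?add0n ?add1n ?expr0 ?expr1; ring.
Qed.

Section S.
Variable R : realType.
Notation vec := 'rV[R]_7.

Lemma inord_eq7 (a b : nat) : (a < 7)%N -> (b < 7)%N ->
  (inord a == inord b :> 'I_7) = (a == b).
Proof.
move=> Ha Hb; apply/eqP/eqP => [E|->//].
by rewrite -(inordK Ha) -(inordK Hb) E.
Qed.

Definition crossL (u v : vec) : seq R :=
  [:: (u 0 (inord 1) * v 0 (inord 2) - u 0 (inord 2) * v 0 (inord 1) + u 0 (inord 3) * v 0 (inord 4) - u 0 (inord 4) * v 0 (inord 3) - u 0 (inord 5) * v 0 (inord 6) + u 0 (inord 6) * v 0 (inord 5));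
   (- u 0 (inord 0) * v 0 (inord 2) + u 0 (inord 2) * v 0 (inord 0) + u 0 (inord 3) * v 0 (inord 5) + u 0 (inord 4) * v 0 (inord 6) - u 0 (inord 5) * v 0 (inord 3) - u 0 (inord 6) * v 0 (inord 4));
   (u 0 (inord 0) * v 0 (inord 1) - u 0 (inord 1) * v 0 (inord 0) + u 0 (inord 3) * v 0 (inord 6) - u 0 (inord 4) * v 0 (inord 5) + u 0 (inord 5) * v 0 (inord 4) - u 0 (inord 6) * v 0 (inord 3));
   (- u 0 (inord 0) * v 0 (inord 4) - u 0 (inord 1) * v 0 (inord 5) - u 0 (inord 2) * v 0 (inord 6) + u 0 (inord 4) * v 0 (inord 0) + u 0 (inord 5) * v 0 (inord 1) + u 0 (inord 6) * v 0 (inord 2));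
   (u 0 (inord 0) * v 0 (inord 3) - u 0 (inord 1) * v 0 (inord 6) + u 0 (inord 2) * v 0 (inord 5) - u 0 (inord 3) * v 0 (inord 0) - u 0 (inord 5) * v 0 (inord 2) + u 0 (inord 6) * v 0 (inord 1));
   (u 0 (inord 0) * v 0 (inord 6) + u 0 (inord 1) * v 0 (inord 3) - u 0 (inord 2) * v 0 (inord 4) - u 0 (inord 3) * v 0 (inord 1) + u 0 (inord 4) * v 0 (inord 2) - u 0 (inord 6) * v 0 (inord 0));
   (- u 0 (inord 0) * v 0 (inord 5) + u 0 (inord 1) * v 0 (inord 4) + u 0 (inord 2) * v 0 (inord 3) - u 0 (inord 3) * v 0 (inord 2) - u 0 (inord 4) * v 0 (inord 1) + u 0 (inord 5) * v 0 (inord 0)) ].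

Lemma e3E (i j k : nat) (u v w : vec) : e3 i j k u v w =
  u 0 (ix i) * (v 0 (ix j) * w 0 (ix k) - v 0 (ix k) * w 0 (ix j))
- u 0 (ix j) * (v 0 (ix i) * w 0 (ix k) - v 0 (ix k) * w 0 (ix i))
+ u 0 (ix k) * (v 0 (ix i) * w 0 (ix j) - v 0 (ix j) * w 0 (ix i)).
Proof.
by rewrite /e3 (@det3f _ (fun a b => (nth u [:: u; v; w] a) 0 (ix (nth i [:: i; j; k] b)))).
Qed.

Lemma cross_coord (u v : vec) (i : nat) : (i < 7)%N ->
  cross u v 0 (inord i) = nth 0 (crossL u v) i.
Proof.
move=> Hi; rewrite /cross mxE /phi !e3E !mxE /ix /=.
rewrite !inord_eq7 //.
do 7?[case: i Hi => [|i] Hi]; rewrite /= ?mulr0n ?mulr1n; first [ring | by []].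
Qed.

Lemma vaddE (A B : vec) i : (A + B) 0 i = A 0 i + B 0 i. Proof. by rewrite mxE. Qed.
Lemma vscaleE (A : vec) c i : (c *: A) 0 i = c * A 0 i. Proof. by rewrite mxE. Qed.
Lemma voppE (A : vec) i : (- A) 0 i = - A 0 i. Proof. by rewrite mxE. Qed.
Lemma vzeroE i : (0 : vec) 0 i = 0. Proof. by rewrite mxE. Qed.

Lemma rowP7 (x y : vec) :
  (forall i, (i < 7)%N -> x 0 (inord i) = y 0 (inord i)) -> x = y.
Proof.
move=> H; apply/rowP => k; rewrite -(inord_val k); exact: H.
Qed.

Ltac coord := apply: rowP7; case=> [|[|[|[|[|[|[|?]]]]]]] ? //;
  do 3 (rewrite ?cross_coord //= ?(vaddE, vscaleE, voppE, vzeroE)).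

Lemma cross0l (v : vec) : cross 0 v = 0.
Proof. coord; ring. Qed.
Lemma cross0r (v : vec) : cross v 0 = 0.
Proof. coord; ring. Qed.

Lemma dotvE (u v : vec) : dotv u v =
  u 0 (inord 0) * v 0 (inord 0) + u 0 (inord 1) * v 0 (inord 1) +
  u 0 (inord 2) * v 0 (inord 2) + u 0 (inord 3) * v 0 (inord 3) +
  u 0 (inord 4) * v 0 (inord 4) + u 0 (inord 5) * v 0 (inord 5) +
  u 0 (inord 6) * v 0 (inord 6).
Proof.
rewrite /dotv (eq_bigr (fun k : 'I_7 => u 0 (inord k) * v 0 (inord k))); last first.
  by move=> k _; rewrite inord_val.
rewrite -(big_mkord xpredT (fun k => u 0 (inord k) * v 0 (inord k))).
rewrite unlock /=; ring.
Qed.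

Lemma crossI1 (u v : vec) : cross u (cross u v) = dotv u v *: u - dotv u u *: v.
Proof. coord; rewrite !dotvE; ring. Qed.

Lemma crossI2 (u v : vec) : cross v (cross u v) = dotv v v *: u - dotv u v *: v.
Proof. coord; rewrite !dotvE; ring. Qed.

Lemma dot_cross1 (u v : vec) : dotv u (cross u v) = 0.
Proof. rewrite dotvE; do 2 rewrite ?cross_coord //=; ring. Qed.
Lemma dot_cross2 (u v : vec) : dotv v (cross u v) = 0.
Proof. rewrite dotvE; do 2 rewrite ?cross_coord //=; ring. Qed.

Lemma cross_expand (u v w : vec) a0 a1 a2 b0 b1 b2 :
  cross (a0 *: u + a1 *: v + a2 *: w) (b0 *: u + b1 *: v + b2 *: w) =
  (a0 * b1 - a1 * b0) *: cross u v + (a0 * b2 - a2 * b0) *: cross u w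
  + (a1 * b2 - a2 * b1) *: cross v w.
Proof. coord; ring. Qed.


Lemma dotv_ge0 (u : vec) : 0 <= dotv u u.
Proof. by apply: sumr_ge0 => k _; rewrite -expr2 sqr_ge0. Qed.

Lemma dotv_eq0 (u : vec) : dotv u u = 0 -> u = 0.
Proof.
move=> H; apply/rowP => k; rewrite vzeroE.
have /(_ k isT) : forall i : 'I_7, true -> u 0 i * u 0 i = 0.
  by apply: psumr_eq0P H => i _; rewrite -expr2 sqr_ge0.
by move/eqP; rewrite mulf_eq0 orbb => /eqP.
Qed.

Lemma dotv_lin (u v w x : vec) a b c :
  dotv (a *: u + b *: v + c *: w) x = a * dotv u x + b * dotv v x + c * dotv w x.
Proof. rewrite !dotvE !(vaddE, vscaleE); ring. Qed.

Lemma dotvC (u v : vec) : dotv u v = dotv v u.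
Proof. rewrite !dotvE; ring. Qed.

End S.


Section M.
Variable R : realType.
Notation vec := 'rV[R]_7.

Definition Umx (u v : vec) : 'M[R]_(3, 7) :=
  \matrix_(i < 3, j < 7) (nth 0 [:: u; v; cross u v] i) 0 j.

Lemma mulU (u v : vec) (a : 'rV[R]_3) :
  a *m Umx u v = a 0 (inord 0) *: u + a 0 (inord 1) *: v + a 0 (inord 2) *: cross u v.
Proof.
apply/rowP => k; rewrite !mxE !big_ord_recl big_ord0 !mxE /= /bump /=.
have -> : (lift ord0 (lift ord0 ord0) : 'I_3) = inord 2 by apply/val_inj; rewrite /= inordK.
have -> : (lift ord0 ord0 : 'I_3) = inord 1 by apply/val_inj; rewrite /= inordK.
have -> : (ord0 : 'I_3) = inord 0 by apply/val_inj; rewrite /= inordK.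
by rewrite addr0 addrA.
Qed.

Lemma rowP3 (x y : 'rV[R]_3) :
  x 0 (inord 0) = y 0 (inord 0) -> x 0 (inord 1) = y 0 (inord 1) ->
  x 0 (inord 2) = y 0 (inord 2) -> x = y.
Proof.
move=> H0 H1 H2; apply/rowP => k; rewrite -(inord_val k).
by case: k => [[|[|[|k]]] Hk] //=.
Qed.

Lemma plane (u v : vec) :
  (forall a b : R, a *: u + b *: v = 0 -> a = 0 /\ b = 0) ->
  associative_plane (Umx u v).
Proof.
move=> indep.
have wne : cross u v != 0.
  apply/eqP => w0.
  have := @crossI1 _ u v; rewrite w0 cross0r => /esym/eqP; rewrite subr_eq0 => /eqP E.
  have H0 : dotv u v *: u + (- dotv u u) *: v = 0 by rewrite E scaleNr subrr.
  have [_ /eqP] := indep _ _ H0.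
  rewrite oppr_eq0 => /eqP/dotv_eq0 u0.
  have H1 : 1 *: u + 0 *: v = 0 by rewrite u0 scaler0 scale0r addr0.
  by have [/eqP] := indep _ _ H1; rewrite oner_eq0.
have dww : dotv (cross u v) (cross u v) != 0.
  by apply/eqP => /dotv_eq0 H; move/eqP: wne.
split.
  have : row_free (Umx u v).
    rewrite -kermx_eq0 -submx0; apply/rV_subP => a /sub_kermxP; rewrite mulU => Ha.
    have := congr1 (fun x => dotv x (cross u v)) Ha.
    rewrite /= dotv_lin dot_cross1 dot_cross2.
    rewrite [dotv 0 _](_ : _ = 0); last by rewrite /dotv big1 // => k _; rewrite mxE mul0r.
    rewrite !mulr0 !add0r => /eqP; rewrite mulf_eq0 (negPf dww) orbF => /eqP a2.
    move: Ha; rewrite a2 scale0r addr0 => /indep [a0 a1].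
    rewrite submx0; apply/eqP; apply: rowP3; by rewrite ?a0 ?a1 ?a2 mxE.
  by move/eqP.
move=> x y /submxP [a ->] /submxP [b ->].
apply/submxP.
pose A0 := a 0 (inord 0); pose A1 := a 0 (inord 1); pose A2 := a 0 (inord 2).
pose B0 := b 0 (inord 0); pose B1 := b 0 (inord 1); pose B2 := b 0 (inord 2).
exists (\row_(i < 3) nth 0
  [:: (A0 * B2 - A2 * B0) * dotv u v + (A1 * B2 - A2 * B1) * dotv v v;
      - (A0 * B2 - A2 * B0) * dotv u u - (A1 * B2 - A2 * B1) * dotv u v;
      A0 * B1 - A1 * B0] i).
rewrite !mulU cross_expand crossI1 crossI2 !mxE !inordK //=.
apply/rowP => k; rewrite !(vaddE, vscaleE, voppE) /A0 /A1 /A2 /B0 /B1 /B2; ring.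
Qed.

Lemma kerU (X : 'M[R]_7) (u v : vec) :
  (forall v w : vec, op X (cross v w) = cross (op X v) w + cross v (op X w)) ->
  op X u = 0 -> op X v = 0 ->
  forall x : vec, (x <= Umx u v)%MS -> op X x = 0.
Proof.
move=> hd hu hv x /submxP [a ->]; rewrite mulU /op.
rewrite !mulmxDl -!scalemxAl.
have hw : op X (cross u v) = 0 by rewrite hd hu hv cross0l cross0r addr0.
by move: hu hv hw; rewrite /op => -> -> ->; rewrite !scaler0 !addr0.
Qed.

End M.


Theorem proposition3p1 (R : realType) (X : 'M[R]_7) :
  in_g2 X -> (\rank X <= 4)%N ->
  exists U : 'M[R]_(3, 7),
    associative_plane U /\ (forall u : 'rV[R]_7, (u <= U)%MS -> op X u = 0).
Proof.
move=> [_ hder] hr.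
have rK : (3 <= \rank (kermx X^T))%N by rewrite mxrank_ker mxrank_tr; lia.
have h0 : (0 < \rank (kermx X^T))%N by lia.
have h1 : (1 < \rank (kermx X^T))%N by lia.
pose B := row_base (kermx X^T).
pose u := row (Ordinal h0) B; pose v := row (Ordinal h1) B.
have inK : forall x : 'rV[R]_7, (x <= B)%MS -> op X x = 0.
  move=> x; rewrite /B eq_row_base => /sub_kermxP; done.
have hu : op X u = 0 by apply: inK; exact: row_sub.
have hv : op X v = 0 by apply: inK; exact: row_sub.
have indep : forall a b : R, a *: u + b *: v = 0 -> a = 0 /\ b = 0.
  move=> a b H.
  pose c : 'rV[R]_(\rank (kermx X^T)) := a *: delta_mx 0 (Ordinal h0) + b *: delta_mx 0 (Ordinal h1).
  have : c *m B = 0 *m B by rewrite mul0mx mulmxDl -!scalemxAl -!rowE.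
  move/(row_free_inj (row_base_free _)) => /rowP Hc.
  have := Hc (Ordinal h0); have := Hc (Ordinal h1); rewrite !mxE /= !mulr1 !mulr0 addr0 add0r => -> ->; done.
exists (@Umx R u v); split; first exact: (@plane R u v indep).
exact: (@kerU R X u v hder hu hv).
Qed.
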